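(* Let $(X,\mathcal{O})$ be a $\sigma$-compact metrizable space without isolated points and $K$ a partition of $X$ parametrized by a locally finite bi-infinite tree with reference point $(T,\pi,\phi)$. (1) For any metric $d$ on $X$ inducing $\mathcal{O}$ with $\mathrm{diam}(X,d)=\infty$, the function $g_d(w)=\mathrm{diam}(K_w,d)$ is a weight function. (2) For any Radon measure $\mu$ on $(X,\mathcal{O})$ with $\mu(X)=\infty$, $\mu(\{x\})=0$ for all $x$, and $\mu(K_w)>0$ for all $w\in T$, the function $g_\mu(w)=\mu(K_w)$ is a weight function.
   Context: Bi-infinite tree: $T$ countable, $\pi:T\to T$ with (T1) any $w,v$ have $n,m\ge0$ with $\pi^n(w)=\pi^m(v)$, (T2) $\pi^n(w)\ne w$ for $n\ge1$; locally finite: $\pi^{-1}(w)=S(w)$ finite for all $w$. Height $[w]=n-m$ where $\pi^n(w)=\pi^m(\phi)$, $(T)_n=\{w:[w]=n\}$, $\Sigma^*$ = sequences $(\omega_n)_{n\in\mathbb{Z}}$ with $\omega_n\in(T)_n$ and $\pi(\omega_{n+1})=\omega_n$. Partition: $w\mapsto K_w$ nonempty compact subsets of $X$ that are not single points, with (P1) $\bigcup_{v\in S(w)}K_v=K_w$, (P2) $\bigcap_{m\ge0}K_{\omega_m}$ is a single point for every $\omega\in\Sigma^*$, (P3) $\bigcup_{w\in(T)_0}K_w=X$. A weight function is $g:T\to(0,\infty)$ with (G1) $\lim_{n\to\infty}g(\pi^n(\phi))=\infty$, (G2) $g(\pi(w))\ge g(w)$ for all $w$, (G3) $\lim_{m\to\infty}g(\omega_m)=0$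 for all $\omega\in\Sigma^*$. *)

(* Defs.v *)
From HB Require Import structures.
From mathcomp Require Import all_boot all_order all_algebra.
From mathcomp Require Import all_classical all_reals all_analysis.
Set Implicit Arguments. Unset Strict Implicit. Unset Printing Implicit Defensive.
Import Order.TTheory GRing.Theory Num.Theory.
Import numFieldNormedType.Exports.
Local Open Scope classical_set_scope.
Local Open Scope ring_scope.

Section Tree.
Variables (T : countType) (pi : T -> T) (phi : T).

Definition tree_T1 := forall w v : T, exists n m : nat, iter n pi w = iter m pi v.
Definition tree_T2 := forall (w : T) (n : nat), (1 <= n)%N -> iter n pi w <> w.
Definition children (w : T) : set T := [set v | pi v = w].
Definition locally_finite_tree := forall w : T, finite_set (children w).
Definition bi_infinite_tree := tree_T1 /\ tree_T2.

Definition has_height (w : T) (k : int) : Prop :=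
  exists n m : nat, iter n pi w = iter m pi phi /\ k = (n%:Z - m%:Z).
Definition level (k : int) : set T := [set w | has_height w k].
Definition Sigma_star (om : int -> T) : Prop :=
  (forall k : int, level k (om k)) /\ (forall k : int, pi (om (k + 1)) = om k).
End Tree.

Definition tree_partition (X : topologicalType) (T : countType) (pi : T -> T)
    (phi : T) (K : T -> set X) : Prop :=
  [/\ (forall w, K w !=set0 /\ compact (K w) /\ ~ (exists x, K w = [set x])),
      (forall w, \bigcup_(v in children pi w) K v = K w),
      (forall om, Sigma_star pi phi om ->
          exists x, \bigcap_(m in [set: nat]) K (om m%:Z) = [set x]) &
      \bigcup_(w in level pi phi 0) K w = [set: X] ].

Definition weight_function (R : realType) (T : countType) (pi : T -> T)
    (phi : T) (g : T -> R) : Prop :=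
  [/\ (forall w, 0 < g w),
      (fun n : nat => g (iter n pi phi)) @ \oo --> +oo,
      (forall w, g w <= g (pi w)) &
      (forall om, Sigma_star pi phi om -> (fun m : nat => g (om m%:Z)) @ \oo --> 0)].

Definition is_metric (R : realType) (X : Type) (d : X -> X -> R) : Prop :=
  [/\ (forall x y, 0 <= d x y), (forall x y, d x y = 0 <-> x = y),
      (forall x y, d x y = d y x) &
      (forall x y z, d x z <= d x y + d y z)].

Definition metric_induces (R : realType) (X : topologicalType)
    (d : X -> X -> R) : Prop :=
  forall U : set X, open U <->
    (forall x, U x -> exists2 e : R, 0 < e & [set y | d x y < e] `<=` U).

Definition metrizable (R : realType) (X : topologicalType) : Prop :=
  exists d : X -> X -> R, is_metric d /\ metric_induces d.

Definition sigma_compact (X : topologicalType) : Prop :=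
  exists C : nat -> set X, (forall n, compact (C n)) /\ \bigcup_n C n = [set: X].

Definition no_isolated_points (X : topologicalType) : Prop :=
  forall x : X, ~ open [set x].

Definition diam (R : realType) (X : Type) (d : X -> X -> R) (A : set X) : \bar R :=
  ereal_sup [set (d p.1 p.2)%:E | p in A `*` A].

Definition borel (X : topologicalType) : set (set X) :=
  smallest (sigma_algebra [set: X]) (@open X).

Definition is_radon_measure (R : realType) (X : topologicalType)
    (mu : set X -> \bar R) : Prop :=
  [/\ mu set0 = 0%E /\ (forall A, borel A -> (0 <= mu A)%E),
      (forall F : nat -> set X, (forall n, borel (F n)) -> trivIset setT F ->
          (fun n => \sum_(0 <= i < n) mu (F i))%E @ \oo --> mu (\bigcup_n F n)),
      (forall C, compact C -> (mu C < +oo)%E),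
      (forall A, borel A ->
          mu A = ereal_inf [set mu U | U in [set U | open U /\ A `<=` U]]) &
      (forall U, open U ->
          mu U = ereal_sup [set mu C | C in [set C | compact C /\ C `<=` U]]) ].

(* Main.v *)
Require Import Defs.
From HB Require Import structures.
From mathcomp Require Import all_boot all_order all_algebra.
From mathcomp Require Import all_classical all_reals all_analysis.
From mathcomp Require Import lra.
Import Order.TTheory GRing.Theory Num.Theory.
Import numFieldNormedType.Exports.
Local Open Scope classical_set_scope.
Local Open Scope ring_scope.
Section TreeLemmas.
Variables (X : topologicalType) (T : countType) (pi : T -> T) (phi : T) (K : T -> set X).
Hypothesis hK : tree_partition pi phi K.

Lemma K_sub_pi w : K w `<=` K (pi w).
Proof.
case: hK => _ hP1 _ _ x Kx; rewrite -hP1; by exists w.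
Qed.

Lemma K_sub_iter n w : K w `<=` K (iter n pi w).
Proof.
elim: n => [//|n IH] x /IH Kx /=; exact: K_sub_pi.
Qed.

Lemma K_chain_mono n m : (n <= m)%N -> K (iter n pi phi) `<=` K (iter m pi phi).
Proof.
move=> nm; rewrite -(subnK nm) iterD; exact: K_sub_iter.
Qed.

Lemma K_cover x : exists n, K (iter n pi phi) x.
Proof.
case: hK => _ _ _ hP3.
have : [set: X] x by [].
rewrite -hP3 => -[w [a [b [hab h0]]] Kwx].
have ab : a = b.
  by move/eqP: h0; rewrite eq_sym subr_eq0 eqz_nat => /eqP.
subst b; exists a; rewrite -hab; exact: K_sub_iter.
Qed.

Lemma K_dec om : Sigma_star pi phi om -> forall m : nat,
  K (om (m.+1)%:Z) `<=` K (om m%:Z).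
Proof.
move=> [_ hs] m; have -> : (m.+1)%:Z = m%:Z + 1 by rewrite -addn1 PoszD.
rewrite -(hs m%:Z); exact: K_sub_pi.
Qed.

Lemma K_dec_mono om : Sigma_star pi phi om -> forall n m : nat, (n <= m)%N ->
  K (om m%:Z) `<=` K (om n%:Z).
Proof.
move=> hom n m nm; rewrite -(subnK nm); elim: (m - n)%N => [//|k IH].
rewrite addSn; apply: subset_trans IH; exact: K_dec.
Qed.
End TreeLemmas.
Arguments K_sub_pi {X T pi phi K}.
Arguments K_sub_iter {X T pi phi K}.
Arguments K_chain_mono {X T pi phi K}.
Arguments K_cover {X T pi phi K}.
Arguments K_dec {X T pi phi K}.
Arguments K_dec_mono {X T pi phi K}.

Lemma compact_nat_cover (X : topologicalType) (A : set X) (f : nat -> set X) :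
  compact A -> (forall n, open (f n)) -> (forall n m, (n <= m)%N -> f n `<=` f m) ->
  A `<=` \bigcup_n f n -> exists N, A `<=` f N.
Proof.
move=> cA of_ mf Af; apply/not_existsP => hN.
have : forall N, exists y, A y /\ ~ f N y.
  move=> N; have /existsNP[y /not_implyP[Ay nfy]] := hN N; by exists y.
move=> /choice[y hy].
have FA : (y @ \oo) A by exists 0%N => // n _; exact: (hy n).1.
have [z [Az clz]] := cA _ _ FA.
have [M _ fMz] := Af z Az.
have nb : nbhs z (f M) by apply: open_nbhs_nbhs; split.
have FB : (y @ \oo) (~` f M).
  by exists M => // n /= Mn fMy; apply: (hy n).2; exact: (mf M n Mn).
have [u [nu fu]] := clz _ _ FB nb.
exact: nu.
Qed.
Section Metric.
Variables (R : realType) (X : topologicalType) (d : X -> X -> R).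
Hypotheses (hd : is_metric d) (hind : metric_induces d).

Definition mball x e := [set y | d x y < e].

Lemma mball_open x e : open (mball x e).
Proof.
case: hd => d0 dxx dsym tri.
apply/hind => y; rewrite /mball /= => dxy.
exists (e - d x y); first by rewrite subr_gt0.
move=> z /= dyz; have := tri x y z; lra.
Qed.

Lemma mball_center x e : 0 < e -> mball x e x.
Proof. by case: hd => _ dxx _ _ e0; rewrite /mball /= (proj2 (dxx x x) erefl). Qed.

Lemma metric_hausdorff : hausdorff_space X.
Proof.
case: hd => d0 dxx dsym tri.
move=> p q clpq; apply: contrapT => npq.
have dpq : 0 < d p q by rewrite lt0r d0 andbT; apply/eqP => /dxx.
have hp : nbhs p (mball p (d p q / 2)).
  by apply: open_nbhs_nbhs; split; [exact: mball_open|apply: mball_center; lra].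
have hq : nbhs q (mball q (d p q / 2)).
  by apply: open_nbhs_nbhs; split; [exact: mball_open|apply: mball_center; lra].
have [z [/= h1 h2]] := clpq _ _ hp hq.
rewrite /mball /= in h1 h2; have := tri p z q; rewrite (dsym z q); lra.
Qed.

Lemma compact_bounded A : compact A -> exists M, forall p q, A p -> A q -> d p q <= M.
Proof.
case: hd => d0 dxx dsym tri.
move=> cA; have [[x0 Ax0]|A0] := pselect (A !=set0); last first.
  exists 0 => p q Ap; exfalso; apply: A0; by exists p.
have [N AN] : exists N, A `<=` mball x0 N%:R.
  apply: (@compact_nat_cover X A (fun n => mball x0 n%:R) cA).
- move=> n; exact: mball_open.
- move=> n m nm y; rewrite /mball /= => h; apply: (lt_le_trans h); by rewrite ler_nat.
- move=> y _; exists (Num.truncn (d x0 y)).+1 => //; exact: truncnS_gt.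
exists (N%:R + N%:R) => p q /AN Ap /AN Aq; move: Ap Aq; rewrite /mball /= => Ap Aq.
have := tri p x0 q; rewrite (dsym p x0); lra.
Qed.

Lemma nested_compact_small (C : nat -> set X) x :
  (forall n, compact (C n)) -> (forall n m, (n <= m)%N -> C m `<=` C n) ->
  \bigcap_(m in [set: nat]) C m = [set x] ->
  forall e, 0 < e -> exists N, C N `<=` mball x e.
Proof.
move=> cC mC hx e e0.
have hs := metric_hausdorff.
have [N hN] : exists N, C 0%N `<=` mball x e `|` ~` C N.
  apply: (@compact_nat_cover X (C 0%N) (fun n => mball x e `|` ~` C n) (cC 0%N)).
- move=> n; apply: openU; first exact: mball_open.
  apply: closed_openC; exact: compact_closed.
- move=> n m nm y [h|h]; [by left|right => Cy; apply: h; exact: mC nm _ Cy].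
- move=> y C0y; have [hall|] := pselect (forall n, C n y).
  + have : [set x] y by rewrite -hx => n _; exact: hall.
    move=> /= ->; exists 0%N => //; left; exact: mball_center.
  + move=> /existsNP[n nCn]; exists n => //; by right.
exists N => y CNy; have := hN y (mC 0%N N (leq0n N) y CNy); by case.
Qed.
End Metric.
Arguments mball {R X}.
Arguments mball_open {R X d}.
Arguments mball_center {R X d}.
Arguments metric_hausdorff {R X d}.
Arguments compact_bounded {R X d} hd hind {A}.
Arguments nested_compact_small {R X d} hd hind {C x}.

Section Diam.
Variables (R : realType) (X : topologicalType) (d : X -> X -> R).

Lemma diam_ge (A : set X) p q : A p -> A q -> ((d p q)%:E <= diam d A)%E.
Proof. move=> Ap Aq; apply: ereal_sup_ubound; by exists (p, q). Qed.

Lemma diam_le (A : set X) M : (forall p q, A p -> A q -> d p q <= M) -> (diam d A <= M%:E)%E.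
Proof. move=> hM; apply: ge_ereal_sup => _ [[p q] [/= Ap Aq] <-]; rewrite lee_fin; exact: hM. Qed.

Lemma diam_mono (A B : set X) : A `<=` B -> (diam d A <= diam d B)%E.
Proof.
move=> AB; apply: ereal_sup_le => _ [[p q] [/= Ap Aq] <-]; exists (p, q) => //.
split; exact: AB.
Qed.
End Diam.
Arguments diam_ge {R X} d {A p q}.
Arguments diam_le {R X} d {A M}.
Arguments diam_mono {R X} d {A B}.

Lemma two_points (X : Type) (A : set X) : A !=set0 -> ~ (exists x, A = [set x]) ->
  exists p q, [/\ A p, A q & p <> q].
Proof.
move=> [p Ap] ns; exists p; apply: contrapT => h; apply: ns; exists p.
apply/seteqP; split => [q Aq|q /= ->//]; apply: contrapT => nq; apply: h; exists q; split => //.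
exact: nesym.
Qed.

Lemma part1 (R : realType) (X : topologicalType) (T : countType)
    (pi : T -> T) (phi : T) (K : T -> set X) (hK : tree_partition pi phi K)
    (d : X -> X -> R) : is_metric d -> metric_induces d ->
      diam d [set: X] = +oo%E ->
      weight_function pi phi (fun w => fine (diam d (K w))).
Proof.
move=> hd hind hdiam.
have hd' := hd; case: hd' => d0 dxx dsym tri.
have hKw w : [/\ K w !=set0, compact (K w) & ~ (exists x, K w = [set x])].
  by case: hK => h _ _ _; have [? [? ?]] := h w.
have fin w : diam d (K w) \is a fin_num.
  have [[p Kp] cK _] := hKw w.
  have [M hM] := compact_bounded hd hind cK.
  apply: fin_real; apply/andP; split.
    apply: (@lt_le_trans _ _ (d p p)%:E); first by rewrite ltNye.
    exact: (diam_ge d).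
  apply: (@le_lt_trans _ _ M%:E); last by rewrite ltey.
  exact: diam_le.
have gE w : (fine (diam d (K w)))%:E = diam d (K w) by rewrite fineK.
have g0 w : 0 <= fine (diam d (K w)).
  have [[p Kp] _ _] := hKw w.
  rewrite -lee_fin gE; apply: le_trans (diam_ge d Kp Kp); by rewrite lee_fin.
split.
- move=> w; have [n0 _ ns] := hKw w.
  have [p [q [Kp Kq pq]]] := two_points _ _ n0 ns.
  rewrite -lte_fin gE; apply: lt_le_trans (diam_ge d Kp Kq).
  by rewrite lte_fin lt0r d0 andbT; apply/eqP => /dxx.
- apply/cvgryPge => A.
  have : (A%:E < diam d [set: X])%E by rewrite hdiam ltey.
  move=> /ereal_sup_gt [_ [[p q] _ <-]] /=; rewrite lte_fin => Apq.
  have [n1 Kp] := K_cover hK p; have [n2 Kq] := K_cover hK q.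
  exists (maxn n1 n2) => // n /= hn.
  have Kp' := K_chain_mono hK _ _ (leq_trans (leq_maxl n1 n2) hn) _ Kp.
  have Kq' := K_chain_mono hK _ _ (leq_trans (leq_maxr n1 n2) hn) _ Kq.
  have := diam_ge d Kp' Kq'; rewrite -gE lee_fin => h; apply/ltW; exact: lt_le_trans Apq h.
- move=> w; rewrite -lee_fin !gE; apply: (diam_mono d); exact: (K_sub_pi hK).
- move=> om hom; apply/cvgrPdist_le => e e0.
  have [x hx] : exists x, \bigcap_(m in [set: nat]) K (om m%:Z) = [set x].
    by case: hK => _ _ h _; exact: h.
  have [N hN] := nested_compact_small hd hind (C := fun m => K (om m%:Z))
    (fun m => let: And3 _ c _ := hKw (om m%:Z) in c) (K_dec_mono hK _ hom) hx (e / 2) ltac:(lra).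
  exists N => // m /= Nm.
  rewrite sub0r normrN ger0_norm //.
  rewrite -lee_fin gE; apply: (diam_le d) => p q Kp Kq.
  have := hN p (K_dec_mono hK _ hom _ _ Nm _ Kp); have := hN q (K_dec_mono hK _ hom _ _ Nm _ Kq).
  rewrite /mball /= => h1 h2; have := tri p x q; rewrite (dsym p x); lra.
Qed.

Section Meas.
Variables (R : realType) (X : topologicalType) (x0 : X) (mu : set X -> \bar R).
Hypothesis hmu : is_radon_measure mu.

Definition PX : Type := X.
HB.instance Definition _ := Choice.on PX.
HB.instance Definition _ := isPointed.Build PX x0.
Definition MX := g_sigma_algebraType (@open X : set (set PX)).

Lemma measE (A : set MX) : measurable A = borel A.
Proof. by []. Qed.

Definition mu' (A : set MX) : \bar R := if `[< borel A >] then mu A else 0%E.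

Lemma mu'E A : borel A -> mu' A = mu A.
Proof. by move=> bA; rewrite /mu' asboolT. Qed.

Lemma mu'0 : mu' set0 = 0%E.
Proof.
case: hmu => [[h0 _] _ _ _ _]; rewrite mu'E // -measE; exact: measurable0.
Qed.

Lemma mu'ge0 A : (0 <= mu' A)%E.
Proof.
case: hmu => [[_ hge] _ _ _ _]; rewrite /mu'; case: asboolP => // bA; exact: hge.
Qed.

Lemma mu'sig : semi_sigma_additive mu'.
Proof.
case: hmu => _ hsig _ _ _ F mF tF mU.
rewrite mu'E //; rewrite (eq_cvg _ _ (g := fun n => (\sum_(0 <= i < n) mu (F i))%E)).
  exact: hsig.
move=> n /=; apply: eq_bigr => i _; apply: mu'E; exact: mF.
Qed.

HB.instance Definition _ := isMeasure.Build _ _ R mu' mu'0 mu'ge0 mu'sig.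

Lemma borel_open (A : set X) : open A -> borel A.
Proof. move=> oA; exact: sub_gen_smallest. Qed.

Lemma borel_closed (A : set X) : closed A -> borel A.
Proof.
move=> cA; rewrite -[A]setCK -measE; apply: measurableC; rewrite measE.
apply: borel_open; exact: closed_openC.
Qed.

Lemma bmu_mono (A B : set X) : borel A -> borel B -> A `<=` B -> (mu A <= mu B)%E.
Proof.
move=> bA bB AB; rewrite -(mu'E _ bA) -(mu'E _ bB).
apply: (le_measure mu'); rewrite ?inE //.
Qed.

Lemma bmu_up (F : nat -> set X) : (forall n, borel (F n)) ->
  (forall n m, (n <= m)%N -> F n `<=` F m) ->
  (fun n => mu (F n)) @ \oo --> mu (\bigcup_n F n).
Proof.
move=> bF mF.
have bU : borel (\bigcup_n F n) by rewrite -measE; apply: bigcupT_measurable.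
rewrite -(mu'E _ bU) (eq_cvg _ _ (g := fun n => mu' (F n))); last by move=> n; rewrite mu'E.
apply: (nondecreasing_cvg_mu (mu := mu') (F := F : nat -> set MX)) => //.
move=> n m nm; apply/subsetPset; exact: mF.
Qed.

Lemma bmu_down (F : nat -> set X) : (forall n, borel (F n)) ->
  (forall n m, (n <= m)%N -> F m `<=` F n) -> (mu (F 0%N) < +oo)%E ->
  (fun n => mu (F n)) @ \oo --> mu (\bigcap_n F n).
Proof.
move=> bF mF fin.
have bU : borel (\bigcap_n F n) by rewrite -measE; apply: bigcapT_measurable.
rewrite -(mu'E _ bU) (eq_cvg _ _ (g := fun n => mu' (F n))); last by move=> n; rewrite mu'E.
apply: (nonincreasing_cvg_mu (mu := mu') (F := F : nat -> set MX)) => //.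
- by move: fin; rewrite -(mu'E _ (bF 0%N)).
- move=> n m nm; apply/subsetPset; exact: mF.
Qed.
End Meas.
Arguments borel_closed {X} x0 {A}.
Arguments bmu_mono {R X} x0 {mu} hmu {A B}.
Arguments bmu_up {R X} x0 {mu} hmu {F}.
Arguments bmu_down {R X} x0 {mu} hmu {F}.

Lemma part2 (R : realType) (X : topologicalType) (T : countType)
    (pi : T -> T) (phi : T) (K : T -> set X) (hK : tree_partition pi phi K)
    (hmet : metrizable R X) (mu : set X -> \bar R) : is_radon_measure mu ->
      mu [set: X] = +oo%E ->
      (forall x : X, mu [set x] = 0%E) ->
      (forall w : T, (0 < mu (K w))%E) ->
      weight_function pi phi (fun w => fine (mu (K w))).
Proof.
move=> hmu hX h1 hpos.
have hmu' := hmu; case: hmu' => [[_ hge] _ hfin _ _].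
have [d [hd hind]] := hmet.
have hs := metric_hausdorff hd hind.
have hKw w : [/\ K w !=set0, compact (K w) & ~ (exists x, K w = [set x])].
  by case: hK => h _ _ _; have [? [? ?]] := h w.
have [x0 _] : K phi !=set0 by have [] := hKw phi.
have bK w : borel (K w).
  apply: (borel_closed x0); apply: compact_closed => //; by case: (hKw w).
have fin w : mu (K w) \is a fin_num.
  apply: fin_real; apply/andP; split.
    by apply: (@lt_le_trans _ _ 0%E); [rewrite ltNye|exact: hge].
  apply: hfin; by case: (hKw w).
have gE w : (fine (mu (K w)))%:E = mu (K w) by rewrite fineK.
split.
- move=> w; rewrite -lte_fin gE; exact: hpos.
- apply/cvgeryP; rewrite (eq_cvg _ _ (g := fun n => mu (K (iter n pi phi)))); last first.
    by move=> n; rewrite gE.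
  have hU : \bigcup_n K (iter n pi phi) = [set: X].
    apply/seteqP; split => // x _.
    have [n Kn] := K_cover hK x; by exists n.
  have := bmu_up x0 hmu (fun n => bK (iter n pi phi)) (K_chain_mono hK).
  by rewrite hU hX.
- move=> w; rewrite -lee_fin !gE; apply: (bmu_mono x0 hmu) => //; exact: (K_sub_pi hK).
- move=> om hom.
  have [x hx] : exists x, \bigcap_(m in [set: nat]) K (om m%:Z) = [set x].
    by case: hK => _ _ h _; exact: h.
  have := @bmu_down R X x0 mu hmu (fun m => K (om m%:Z)) (fun m => bK _)
    (K_dec_mono hK _ hom) (hfin _ (let: And3 _ c _ := hKw (om 0%:Z) in c)).
  rewrite hx h1 => /fine_cvgP [_ h]; exact: h.
Qed.

Theorem proposition3p2 (R : realType) (X : topologicalType) (T : countType)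
    (pi : T -> T) (phi : T) (K : T -> set X)
    (hsc : sigma_compact X) (hmet : metrizable R X) (hiso : no_isolated_points X)
    (htree : bi_infinite_tree pi) (hlf : locally_finite_tree pi)
    (hK : tree_partition pi phi K) :
  (forall d : X -> X -> R, is_metric d -> metric_induces d ->
      diam d [set: X] = +oo%E ->
      weight_function pi phi (fun w => fine (diam d (K w)))) /\
  (forall mu : set X -> \bar R, is_radon_measure mu ->
      mu [set: X] = +oo%E ->
      (forall x : X, mu [set x] = 0%E) ->
      (forall w : T, (0 < mu (K w))%E) ->
      weight_function pi phi (fun w => fine (mu (K w)))).
Proof.
split.
- move=> d; exact: part1.
- move=> mu; exact: part2.
Qed.
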